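(* Consider the multi-element (three spatial elements, periodic), single-slab space-time SBP scheme $$\mathsf D_t\boldsymbol\rho+\tilde{\mathsf D}_x\langle v\boldsymbol g\rangle=-\sigma_a\boldsymbol\rho-\mathsf H_t^{-1}\mathsf t_B\mathsf t_B^\top(\boldsymbol\rho-\boldsymbol\rho(0)),$$ $$\mathsf D_t\boldsymbol g_k+\tfrac{v_k}{\varepsilon}\tilde{\mathsf D}_x\boldsymbol g_k-\tfrac1\varepsilon\langle v\tilde{\mathsf D}_x\boldsymbol g\rangle+\tfrac{v_k}{\varepsilon^2}\tilde{\mathsf D}_x\boldsymbol\rho=-\Big(\tfrac{\sigma_s}{\varepsilon^2}+\sigma_a\Big)\boldsymbol g_k-\mathsf H_t^{-1}\mathsf t_B\mathsf t_B^\top(\boldsymbol g_k-\boldsymbol g_k(0)),\quad k=1,\dots,n_v.$$ This scheme is asymptotic preserving: for fixed discretization, in the formal limit $\varepsilon\to0$ (assuming the discrete derivative approximations remain bounded) it reduces to $\mathsf D_t\boldsymbol\rho=\tilde{\mathsf D}_x\big(\tfrac{\langle v^2\rangle}{\sigma_s}\tilde{\mathsf D}_x\boldsymbol\rho\big)-\sigma_a\boldsymbol\rho-\mathsf H_t^{-1}\mathsf t_B\mathsf t_B^\top(\boldsymbol\rho-\boldsymbol\rho(0))$, a consistent and stable discretization of $\partial_t\rho=\langle v^2\rangle\partial_x\big(\tfrac1{\sigma_s}\partial_x\rho\big)-\sigma_a\rho$.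
   Context: SBP operators: $\bar{\mathsf D}=\bar{\mathsf H}^{-1}\bar{\mathsf Q}$ on nodes $x_0<\dots<x_n$ is a degree-$p$ SBP approximation of $d/dx$ if it differentiates monomials of degree $\le p$ exactly, $\bar{\mathsf H}$ is diagonal symmetric positive definite, and $\bar{\mathsf Q}+\bar{\mathsf Q}^\top=\bar{\mathsf E}=\bar{\boldsymbol t}_R\bar{\boldsymbol t}_R^\top-\bar{\boldsymbol t}_L\bar{\boldsymbol t}_L^\top=\mathrm{diag}(-1,0,\dots,0,1)$, $\bar{\boldsymbol t}_L,\bar{\boldsymbol t}_R$ first/last unit vectors. $\bar{\mathsf D}_x=\bar{\mathsf H}_x^{-1}\bar{\mathsf Q}_x$ on $n_x+1$ spatial nodes per element, $\bar{\mathsf S}_x=\bar{\mathsf Q}_x-\frac12\bar{\mathsf E}_x$; $\bar{\mathsf D}_t=\bar{\mathsf H}_t^{-1}\bar{\mathsf Q}_t$ on $n_t+1$ temporal nodes with first/last unit vectors $\bar{\boldsymbol t}_B,\bar{\boldsymbol t}_T$. $\tilde{\bar{\mathsf D}}^G_x=(\mathsf I_3\otimes\bar{\mathsf H}_x^{-1})\tilde{\bar{\mathsf Q}}^G_x$, with $\tilde{\bar{\mathsf Q}}^G_x$ the $3\times3$ block matrix having diagonal blocks $\bar{\mathsf S}_x$, blocks $(1,2),(2,3),(3,1)$ equal to $\frac12\bar{\boldsymbol t}_R\bar{\boldsymbol t}_L^\top$, blocks $(2,1),(3,2),(1,3)$ equal to $-\frac12\bar{\boldsymbol t}_L\bar{\boldsymbol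 t}_R^\top$. $\tilde{\mathsf D}_x=\mathsf I_{n_t}\otimes\tilde{\bar{\mathsf D}}^G_x$, $\mathsf D_t=\bar{\mathsf D}_t\otimes\mathsf I_3\otimes\mathsf I_{n_x}$, $\mathsf H_t=\bar{\mathsf H}_t\otimes\mathsf I_3\otimes\mathsf I_{n_x}$, $\mathsf t_B=\bar{\boldsymbol t}_B\otimes\mathsf I_3\otimes\mathsf I_{n_x}$ ($\mathsf I_{n_x},\mathsf I_{n_t}$ identities of sizes $n_x+1,n_t+1$). Velocity nodes $v_k$, weights $\omega_k$ with $\sum\omega_k=1$, $\sum\omega_kv_k=0$; $\langle\boldsymbol a\rangle=\sum\omega_k\boldsymbol a_k$, $\langle v^2\rangle=\sum\omega_kv_k^2$. $\varepsilon>0$, $\sigma_s>0$, $\sigma_a\ge0$. A scheme is asymptotic preserving if, for fixed discretization parameters, in the limit $\varepsilon\to0$ it becomes a consistent (and stable) discretization of the macroscopic limit equation; stability of the limit scheme means the final-time discrete energy is bounded by initial-data terms. *)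

(* Defs.v *)
From HB Require Import structures.
From mathcomp Require Import all_boot all_order all_algebra.
From mathcomp Require Import all_classical all_reals all_analysis.
From mathcomp Require Export mxtens.

Unset Printing Implicit Defensive.

Import Order.TTheory GRing.Theory Num.Theory numFieldNormedType.Exports.
Local Open Scope ring_scope.

Definition tfirst (R : pzRingType) (n : nat) : 'cV[R]_n.+1 := delta_mx ord0 0.
Definition tlast (R : pzRingType) (n : nat) : 'cV[R]_n.+1 := delta_mx ord_max 0.

Definition Emx (R : pzRingType) (n : nat) : 'M[R]_n.+1 :=
  tlast R n *m (tlast R n)^T - tfirst R n *m (tfirst R n)^T.

Definition is_SBP (R : realFieldType) (n p : nat) (x : 'I_n.+1 -> R)
  (H Q : 'M[R]_n.+1) : Prop :=
  [/\ (forall i j : 'I_n.+1, (i < j)%N -> x i < x j),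
      is_diag_mx H,
      (forall i, 0 < H i i),
      Q + Q^T = Emx R n
    & forall m : nat, (m <= p)%N ->
        invmx H *m Q *m (\col_i (x i ^+ m)) = \col_i (m%:R * x i ^+ m.-1)].

Definition Smx (R : realFieldType) (n : nat) (Q : 'M[R]_n.+1) : 'M[R]_n.+1 :=
  Q - 2^-1 *: Emx R n.

(* Entry (mxtens_index (a,i), mxtens_index (b,j)) is entry (i,j) of block (a,b). *)
Definition QGblock (R : realFieldType) (n : nat) (Q : 'M[R]_n.+1) (a b : 'I_3)
  : 'M[R]_n.+1 :=
  if a == b then Smx R n Q
  else if b == ordS a then 2^-1 *: (tlast R n *m (tfirst R n)^T)
  else if a == ordS b then - 2^-1 *: (tfirst R n *m (tlast R n)^T)
  else 0.

Definition QG (R : realFieldType) (n : nat) (Q : 'M[R]_n.+1) : 'M[R]_(3 * n.+1) :=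
  \matrix_(k, l) QGblock R n Q (mxtens_unindex k).1 (mxtens_unindex l).1
                   (mxtens_unindex k).2 (mxtens_unindex l).2.

Definition DG (R : realFieldType) (n : nat) (H Q : 'M[R]_n.+1) : 'M[R]_(3 * n.+1) :=
  (1%:M *t invmx H) *m QG R n Q.

(* space-time operators; global index = time index (x) (element (x) node) *)
Definition Dtil (R : realFieldType) (nt nx : nat) (Hx Qx : 'M[R]_nx.+1)
  : 'M[R]_(nt.+1 * (3 * nx.+1)) := (1%:M : 'M[R]_nt.+1) *t DG R nx Hx Qx.
Definition Dtbig (R : realFieldType) (nt nx : nat) (Ht Qt : 'M[R]_nt.+1)
  : 'M[R]_(nt.+1 * (3 * nx.+1)) :=
  (invmx Ht *m Qt) *t (1%:M : 'M[R]_(3 * nx.+1)).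
Definition Htbig (R : realFieldType) (nt nx : nat) (Ht : 'M[R]_nt.+1)
  : 'M[R]_(nt.+1 * (3 * nx.+1)) := Ht *t (1%:M : 'M[R]_(3 * nx.+1)).
Definition tBbig (R : realFieldType) (nt nx : nat)
  : 'M[R]_(nt.+1 * (3 * nx.+1), 1 * (3 * nx.+1)) :=
  tfirst R nt *t (1%:M : 'M[R]_(3 * nx.+1)).
Definition tTbig (R : realFieldType) (nt nx : nat)
  : 'M[R]_(nt.+1 * (3 * nx.+1), 1 * (3 * nx.+1)) :=
  tlast R nt *t (1%:M : 'M[R]_(3 * nx.+1)).

(* SAT term H_t^{-1} t_B (t_B^T u - u0), u0 = t_B^T u(0) the initial data *)
Definition SAT (R : realFieldType) (nt nx : nat) (Ht : 'M[R]_nt.+1)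
  (u : 'cV[R]_(nt.+1 * (3 * nx.+1))) (u0 : 'cV[R]_(1 * (3 * nx.+1))) :=
  invmx (Htbig R nt nx Ht) *m tBbig R nt nx *m ((tBbig R nt nx)^T *m u - u0).

Definition vavg (R : realFieldType) (nv : nat) (V : zmodType) (s : R -> V -> V)
  (w : 'I_nv -> R) (a : 'I_nv -> V) : V := \sum_(k < nv) s (w k) (a k).

Definition micro_macro_scheme (R : realFieldType) (nt nx nv : nat)
  (Ht Qt : 'M[R]_nt.+1) (Hx Qx : 'M[R]_nx.+1) (v w : 'I_nv -> R)
  (sigs siga eps : R) (rho0 : 'cV[R]_(1 * (3 * nx.+1)))
  (g0 : 'I_nv -> 'cV[R]_(1 * (3 * nx.+1)))
  (rho : 'cV[R]_(nt.+1 * (3 * nx.+1))) (g : 'I_nv -> 'cV[R]_(nt.+1 * (3 * nx.+1)))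
  : Prop :=
  let Dt := Dtbig R nt nx Ht Qt in
  let Dx := Dtil R nt nx Hx Qx in
  Dt *m rho + Dx *m vavg R nv _ *:%R w (fun k => v k *: g k)
    = - (siga *: rho) - SAT R nt nx Ht rho rho0
  /\ forall k : 'I_nv,
    Dt *m g k + (v k / eps) *: (Dx *m g k)
      - eps^-1 *: vavg R nv _ *:%R w (fun j => v j *: (Dx *m g j))
      + (v k / eps ^+ 2) *: (Dx *m rho)
    = - ((sigs / eps ^+ 2 + siga) *: g k) - SAT R nt nx Ht (g k) (g0 k).

Definition limit_scheme (R : realFieldType) (nt nx nv : nat)
  (Ht Qt : 'M[R]_nt.+1) (Hx Qx : 'M[R]_nx.+1) (v w : 'I_nv -> R)
  (sigs siga : R) (rho0 : 'cV[R]_(1 * (3 * nx.+1)))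
  (rho : 'cV[R]_(nt.+1 * (3 * nx.+1))) : Prop :=
  let Dx := Dtil R nt nx Hx Qx in
  Dtbig R nt nx Ht Qt *m rho
    = Dx *m ((vavg R nv _ *%R w (fun k => v k ^+ 2) / sigs) *: (Dx *m rho))
      - siga *: rho - SAT R nt nx Ht rho rho0.

Definition energy (R : realFieldType) (nx : nat) (Hx : 'M[R]_nx.+1)
  (u : 'cV[R]_(1 * (3 * nx.+1))) : R :=
  (u^T *m ((1%:M : 'M[R]_1) *t ((1%:M : 'M[R]_3) *t Hx)) *m u) 0 0.

(* Main.v *)
Require Import Defs.
From HB Require Import structures.
From mathcomp Require Import all_boot all_order all_algebra.
From mathcomp Require Import all_classical all_reals all_analysis.
From mathcomp Require Import mxtens.
From mathcomp Require Import ring lra.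
Import Order.TTheory GRing.Theory Num.Theory numFieldNormedType.Exports.
Local Open Scope ring_scope.
Local Open Scope classical_set_scope.
Lemma tens11 (R : realFieldType) m n :
  (1%:M : 'M[R]_m) *t (1%:M : 'M[R]_n) = 1%:M.
Proof.
apply/matrixP => i j.
case: (mxtens_indexP i) => a b; case: (mxtens_indexP j) => c d.
rewrite tensmxE !mxE (can_eq (@mxtens_indexK _ _)) xpair_eqE.
by case: (a == c); case: (b == d); rewrite ?mulr1 ?mulr0.
Qed.

Lemma tensDl (R : realFieldType) m n p q (A B : 'M[R]_(m,n)) (C : 'M[R]_(p,q)) :
  (A + B) *t C = A *t C + B *t C.
Proof. by apply/matrixP => i j; rewrite !mxE mulrDl. Qed.

Lemma tensNl (R : realFieldType) m n p q (A : 'M[R]_(m,n)) (C : 'M[R]_(p,q)) :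
  (- A) *t C = - (A *t C).
Proof. by apply/matrixP => i j; rewrite !mxE mulNr. Qed.

Lemma invmx_eq (R : realFieldType) n (A B : 'M[R]_n) :
  A \in unitmx -> B *m A = 1%:M -> invmx A = B.
Proof.
move=> uA BA; rewrite -[invmx A]mul1mx -BA -mulmxA mulmxV // mulmx1 //.
Qed.

Lemma tens_unit1 (R : realFieldType) m n (A : 'M[R]_m.+1) :
  A \in unitmx -> (A *t (1%:M : 'M[R]_n.+1)) \in unitmx.
Proof. move=> uA; apply: tensmx_unit => //; exact: unitmx1. Qed.

Lemma invmx_tens1 (R : realFieldType) m n (A : 'M[R]_m.+1) :
  A \in unitmx -> invmx (A *t (1%:M : 'M[R]_n.+1)) = invmx A *t 1%:M.
Proof.
move=> uA; apply: invmx_eq; first exact: tens_unit1.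
by rewrite tensmx_mul mulVmx // mulmx1 tens11.
Qed.

Definition dnn (R : realFieldType) n (D : 'M[R]_n) :=
  (forall i j, i != j -> D i j = 0) /\ (forall i, 0 <= D i i).
Arguments dnn {R n}.

Lemma dnn_tens (R : realFieldType) m n (A : 'M[R]_m) (B : 'M[R]_n) :
  dnn A -> dnn B -> dnn (A *t B).
Proof.
move=> [A0 Ap] [B0 Bp]; split.
  move=> i j; case: (mxtens_indexP i) => a b; case: (mxtens_indexP j) => c d.
  rewrite (can_eq (@mxtens_indexK _ _)) xpair_eqE negb_and tensmxE.
  by case/orP => [/A0 -> | /B0 ->]; rewrite ?mul0r ?mulr0.
move=> i; case: (mxtens_indexP i) => a b; rewrite tensmxE; exact: mulr_ge0.
Qed.

Lemma dnn1 (R : realFieldType) n : dnn (1%:M : 'M[R]_n).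
Proof.
split => [i j /negbTE nij|i]; rewrite mxE.
  by rewrite nij.
by rewrite mulrn_wge0.
Qed.

Lemma dnn_sym (R : realFieldType) n (D : 'M[R]_n) : dnn D -> D^T = D.
Proof.
move=> [D0 _]; apply/matrixP => i j; rewrite mxE.
have [->|nij] := eqVneq i j; first by [].
by rewrite D0 1?eq_sym // D0.
Qed.

Lemma dnn_form (R : realFieldType) n (D : 'M[R]_n) (y : 'cV[R]_n) :
  dnn D -> 0 <= (y^T *m D *m y) 0 0.
Proof.
move=> [D0 Dp]; rewrite mxE; apply: sumr_ge0 => k _.
rewrite mxE (bigD1 k) //= big1 => [|l /D0 ->]; last by rewrite mulr0.
rewrite addr0 !mxE -mulrA mulrCA; apply: mulr_ge0 => //.
by rewrite -expr2 sqr_ge0.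
Qed.

Lemma dnn_SBP (R : realFieldType) n p x (H Q : 'M[R]_n.+1) :
  is_SBP R n p x H Q -> dnn H.
Proof.
case=> _ /is_diag_mxP Hd Hp _ _; split => [i j nij|i]; last exact: ltW.
by apply: Hd.
Qed.

Lemma unit_SBP (R : realFieldType) n p x (H Q : 'M[R]_n.+1) :
  is_SBP R n p x H Q -> H \in unitmx.
Proof.
case=> _ /is_diag_mxP Hd Hp _ _.
have -> : H = diag_mx (\row_i H i i).
  apply/matrixP => i j; rewrite !mxE.
  have [->|nij] := eqVneq i j; first by rewrite ?eqxx ?mulr1n.
  by rewrite Hd // mulr0n.
rewrite unitmxE det_diag unitfE; apply/prodf_neq0 => i _.
by rewrite mxE gt_eqF.
Qed.
Arguments unit_SBP {R n p x H Q}.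
Arguments dnn_SBP {R n p x H Q}.
Lemma sum_tens (R : realFieldType) m n (F : 'I_(m * n) -> R) :
  \sum_k F k = \sum_(a < m) \sum_(b < n) F (mxtens_index (a, b)).
Proof.
rewrite pair_bigA /=.
rewrite (reindex (@mxtens_index m n)) /=; last first.
  exact: onW_bij (Bijective (@mxtens_indexK m n) (@mxtens_unindexK m n)).
by apply: eq_bigr => -[a b].
Qed.

Lemma dd_mul (R : realFieldType) n (p q : 'I_n.+1) (y : 'cV[R]_n.+1) i :
  (delta_mx p (0 : 'I_1) *m (delta_mx q (0 : 'I_1))^T *m y) i 0 = delta_mx p (0 : 'I_1) i 0 * y q 0.
Proof.
rewrite -mulmxA trmx_delta -rowE mxE big_ord1 !mxE; congr (_ * _).
Qed.

Lemma QGblock_sum (R : realFieldType) n (Q : 'M[R]_n.+1) (y : 'I_3 -> 'cV[R]_n.+1) (a : 'I_3) :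
  exists b c : 'I_3, [/\ ordS a = b, ordS c = a &
  \sum_b' (QGblock R n Q a b' *m y b') =
    Smx R n Q *m y a + 2^-1 *: (tlast R n *m (tfirst R n)^T *m y b)
    + (- 2^-1) *: (tfirst R n *m (tlast R n)^T *m y c)].
Proof.
have E : forall i j : 'I_3, val i = val j -> y i = y j by move=> i j /val_inj ->.
rewrite !big_ord_recr big_ord0 /=.
case: a => [[|[|[|//]]] Ha].
- exists (Ordinal (isT : (1 < 3)%N)), (Ordinal (isT : (2 < 3)%N)); split; try by apply: val_inj.
  rewrite /QGblock /= add0r -!scalemxAl.
  by congr (_ + _ + _); [congr (_ *m _) | congr (_ *: (_ *m _)) | congr (_ *: (_ *m _))]; apply: E.
- exists (Ordinal (isT : (2 < 3)%N)), (Ordinal (isT : (0 < 3)%N)); split; try by apply: val_inj.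
  rewrite /QGblock /= add0r -!scalemxAl -addrA addrC.
  by congr (_ + _ + _); [congr (_ *m _) | congr (_ *: (_ *m _)) | congr (_ *: (_ *m _))]; apply: E.
- exists (Ordinal (isT : (0 < 3)%N)), (Ordinal (isT : (1 < 3)%N)); split; try by apply: val_inj.
  rewrite /QGblock /= add0r -!scalemxAl addrC addrA.
  by congr (_ + _ + _); [congr (_ *m _) | congr (_ *: (_ *m _)) | congr (_ *: (_ *m _))]; apply: E.
Qed.
Lemma mxDE (R : realFieldType) m n (A B : 'M[R]_(m,n)) i j : (A + B) i j = A i j + B i j.
Proof. by rewrite mxE. Qed.
Lemma mxBE (R : realFieldType) m n (A B : 'M[R]_(m,n)) i j : (A - B) i j = A i j - B i j.
Proof. by rewrite !mxE. Qed.
Lemma mxNE (R : realFieldType) m n (A : 'M[R]_(m,n)) i j : (- A) i j = - A i j.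
Proof. by rewrite !mxE. Qed.
Lemma mxZE (R : realFieldType) m n a (A : 'M[R]_(m,n)) i j : (a *: A) i j = a * A i j.
Proof. by rewrite !mxE. Qed.

Lemma poly_expand (R : realFieldType) (p : {poly R}) n :
  (size p <= n)%N -> p = \sum_(m < n) p`_m *: 'X^m.
Proof.
move=> hs; rewrite -poly_def; apply/polyP => k; rewrite coef_poly.
by case: ltnP => // hk; rewrite nth_default // (leq_trans hs hk).
Qed.

Lemma consist (R : realFieldType) nx px xn (Hx Qx : 'M[R]_nx.+1) :
  is_SBP R nx px xn Hx Qx ->
  forall P : 'I_3 -> {poly R},
  (forall e, (size (P e) <= px.+1)%N) ->
  (forall e, (P e).[xn ord_max] = (P (ordS e)).[xn ord0]) ->
  forall (e : 'I_3) (j : 'I_nx.+1),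
    (DG R nx Hx Qx *m
       \col_k (P (mxtens_unindex k).1).[xn (mxtens_unindex k).2])
      (mxtens_index (e, j)) 0
    = (P e)^`().[xn j].
Proof.
move=> sbp P Psz Pc e j.
set u := \col_k _.
pose uP a := \col_i (P a).[xn i] : 'cV[R]_nx.+1.
have QGu : forall a i, (QG R nx Qx *m u) (mxtens_index (a,i)) 0 = (Qx *m uP a) i 0.
  move=> a i; rewrite mxE sum_tens.
  transitivity ((\sum_b (QGblock R nx Qx a b *m uP b)) i 0).
    rewrite summxE; apply: eq_bigr => b _; rewrite mxE; apply: eq_bigr => l _.
    by rewrite !mxE !mxtens_indexK.
  have [b [c [Hb Hc ->]]] := @QGblock_sum R nx Qx uP a.
  rewrite !mxDE !mxZE !dd_mul.
  rewrite /Smx mulmxBl -scalemxAl /Emx mulmxBl mxBE mxZE.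
  rewrite mxBE !dd_mul !mxE.
  have h1 := Pc a; have h2 := Pc c; rewrite Hb in h1; rewrite Hc in h2.
  rewrite h1 -h2; ring.
rewrite /DG -mulmxA mxE sum_tens (bigD1 e) //=.
rewrite [X in _ + X]big1 ?addr0; last first.
  move=> a nae; apply: big1 => i _; rewrite tensmxE !mxE eq_sym (negbTE nae) mul0r mul0r //.
transitivity ((invmx Hx *m (Qx *m uP e)) j 0).
  rewrite mxE; apply: eq_bigr => i _; rewrite tensmxE QGu !mxE eqxx mul1r //.
have uPE : uP e = \sum_(m < px.+1) (P e)`_m *: \col_i (xn i ^+ m).
  apply/matrixP => i k; rewrite summxE !mxE (horner_coef_wide _ (Psz e)).
  by apply: eq_bigr => m _; rewrite !mxE.
case: sbp => _ _ _ _ exact.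
rewrite mulmxA uPE mulmx_sumr summxE.
rewrite {2}(@poly_expand R _ _ (Psz e)) raddf_sum horner_sum.
apply: eq_bigr => m _.
rewrite -scalemxAr exact; last by rewrite -ltnS.
by rewrite !mxE /= derivZ hornerZ derivXn hornerMn hornerXn mulr_natl.
Qed.
Definition bf (R : realFieldType) n (M : 'M[R]_n) (x y : 'cV[R]_n) : R :=
  (x^T *m M *m y) 0 0.
Arguments bf {R n}.

Lemma bf_tr (R : realFieldType) n (M : 'M[R]_n) x y : bf M x y = bf M^T y x.
Proof.
have h : forall B : 'M[R]_1, B 0 0 = B^T 0 0 by move=> B; rewrite mxE.
by rewrite /bf [LHS]h !trmx_mul trmxK mulmxA.
Qed.

Lemma bf_conj (R : realFieldType) n m (A : 'M[R]_(n, m)) (M : 'M[R]_m) x :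
  bf (A *m M *m A^T) x x = bf M (A^T *m x) (A^T *m x).
Proof. by rewrite /bf trmx_mul trmxK !mulmxA. Qed.

Lemma bf_conjT (R : realFieldType) n m (A : 'M[R]_(m, n)) (M : 'M[R]_m) x :
  bf (A^T *m M *m A) x x = bf M (A *m x) (A *m x).
Proof. by rewrite /bf trmx_mul !mulmxA. Qed.

Lemma bf_addM (R : realFieldType) n (M N : 'M[R]_n) x y : bf (M + N) x y = bf M x y + bf N x y.
Proof. by rewrite /bf mulmxDr mulmxDl mxDE. Qed.

Lemma bf_oppM (R : realFieldType) n (M : 'M[R]_n) x y : bf (- M) x y = - bf M x y.
Proof. by rewrite /bf mulmxN mulNmx mxNE. Qed.

Lemma bf_subr (R : realFieldType) n (M : 'M[R]_n) x y z : bf M x (y - z) = bf M x y - bf M x z.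
Proof. by rewrite /bf mulmxBr mxBE. Qed.

Lemma bf_subl (R : realFieldType) n (M : 'M[R]_n) x y z : bf M (y - z) x = bf M y x - bf M z x.
Proof. by rewrite /bf linearB /= mulmxBl mulmxBl mxBE. Qed.

Lemma bf_dnn (R : realFieldType) n (M : 'M[R]_n) x : dnn M -> 0 <= bf M x x.
Proof. exact: dnn_form. Qed.

Lemma tensNr (R : realFieldType) m n p q (A : 'M[R]_(m,n)) (C : 'M[R]_(p,q)) :
  A *t (- C) = - (A *t C).
Proof. by apply/matrixP => i j; rewrite !mxE mulrN. Qed.

Lemma invmx_tens (R : realFieldType) m n (A : 'M[R]_m) (B : 'M[R]_n) :
  (0 < m)%N -> (0 < n)%N -> A \in unitmx -> B \in unitmx ->
  invmx (A *t B) = invmx A *t invmx B.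
Proof.
move=> m0 n0 uA uB; apply: invmx_eq.
  by apply: tensmx_unit => //; rewrite -lt0n.
by rewrite tensmx_mul !mulVmx // tens11.
Qed.

Lemma Emx_tr (R : realFieldType) n : (Emx R n)^T = Emx R n.
Proof. by rewrite /Emx linearB /= !trmx_mul !trmxK. Qed.

Lemma Smx_skew (R : realFieldType) n (Q : 'M[R]_n.+1) :
  Q + Q^T = Emx R n -> (Smx R n Q)^T = - Smx R n Q.
Proof.
move=> hQ; rewrite /Smx linearB /= linearZ /= Emx_tr.
have -> : Q^T = Emx R n - Q by rewrite -hQ addrC addKr.
apply/matrixP => i j; rewrite !mxE; field; by rewrite ?pnatr_eq0.
Qed.

Lemma QGblock_skew (R : realFieldType) n (Q : 'M[R]_n.+1) (a b : 'I_3) :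
  Q + Q^T = Emx R n -> (QGblock R n Q b a)^T = - QGblock R n Q a b.
Proof.
move=> hQ.
have T1 : (2^-1 *: (tlast R n *m (tfirst R n)^T))^T = - (- 2^-1 *: (tfirst R n *m (tlast R n)^T)).
  by rewrite linearZ /= trmx_mul trmxK scaleNr opprK.
have T2 : (- 2^-1 *: (tfirst R n *m (tlast R n)^T))^T = - (2^-1 *: (tlast R n *m (tfirst R n)^T)).
  by rewrite linearZ /= trmx_mul trmxK scaleNr.
case: a => [[|[|[|//]]] Ha]; case: b => [[|[|[|//]]] Hb];
  rewrite /QGblock /= ?Smx_skew ?T1 ?T2 ?trmx0 ?oppr0 //;
  congr (- Smx _ _ _); done.
Qed.

Lemma QG_skew (R : realFieldType) n (Q : 'M[R]_n.+1) :
  Q + Q^T = Emx R n -> (QG R n Q)^T = - QG R n Q.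
Proof.
move=> hQ; apply/matrixP => k l; rewrite !mxE.
have h : forall (B : 'M[R]_n.+1) i j, B i j = B^T j i by move=> B i j; rewrite mxE.
by rewrite h QGblock_skew // mxNE.
Qed.
Lemma stability (R : realFieldType) nt nx nv pt px tn (Ht Qt : 'M[R]_nt.+1) xn
  (Hx Qx : 'M[R]_nx.+1) (v w : 'I_nv -> R) sigs siga rho0 r :
  is_SBP R nt pt tn Ht Qt -> is_SBP R nx px xn Hx Qx ->
  (forall k, 0 <= w k) -> 0 < sigs -> 0 <= siga ->
  limit_scheme R nt nx nv Ht Qt Hx Qx v w sigs siga rho0 r ->
  energy R nx Hx ((tTbig R nt nx)^T *m r) <= energy R nx Hx rho0.
Proof.
move=> sbt sbx w0 s0 a0 L.
have uHt := unit_SBP sbt; have uHx := unit_SBP sbx.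
have dHt := dnn_SBP sbt; have dHx := dnn_SBP sbx.
have hQt : Qt + Qt^T = Emx R nt by case: sbt.
have hQx : Qx + Qx^T = Emx R nx by case: sbx.
set Hg := (1%:M : 'M[R]_3) *t Hx.
set G := (1%:M : 'M[R]_1) *t Hg.
set Hb := Ht *t Hg.
set c := vavg R nv _ *%R w (fun k => v k ^+ 2) / sigs.
have dHg : dnn Hg by apply: dnn_tens => //; exact: dnn1.
have dG : dnn G by apply: dnn_tens => //; exact: dnn1.
have dHb : dnn Hb by apply: dnn_tens.
have c0 : 0 <= c.
  apply: divr_ge0; last exact: ltW.
  by apply: sumr_ge0 => k _; apply: mulr_ge0 => //; exact: sqr_ge0.
have HgT : Hg^T = Hg by apply: dnn_sym.
have GT : G^T = G by apply: dnn_sym.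
have HxiT : (invmx Hx)^T = invmx Hx by rewrite trmx_inv dnn_sym.
have HgHi : Hg *m ((1%:M : 'M[R]_3) *t (invmx Hx)) = 1%:M by rewrite tensmx_mul mulmx1 mulmxV // tens11.
have E := congr1 (fun M => (r^T *m Hb *m M) 0 0) L.
rewrite /= !mulmxBr !mxBE in E.
have h1 : (r^T *m Hb *m (Dtbig R nt nx Ht Qt *m r)) 0 0 = bf (Qt *t Hg) r r.
  rewrite /bf mulmxA -[r^T *m Hb *m _]mulmxA /Hb /Dtbig tensmx_mul mulmxA mulmxV // mul1mx mulmx1 //.
have h1' : 2 * bf (Qt *t Hg) r r = bf G ((tTbig R nt nx)^T *m r) ((tTbig R nt nx)^T *m r)
                                 - bf G ((tBbig R nt nx)^T *m r) ((tBbig R nt nx)^T *m r).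
  rewrite mulr2n mulrDl mul1r {2}bf_tr trmx_tens HgT -bf_addM -tensDl hQt /Emx tensDl tensNl bf_addM bf_oppM.
  have K : forall t : 'cV[R]_nt.+1, (t *m t^T) *t Hg = (t *t (1%:M : 'M[R]_(3 * nx.+1))) *m G *m (t *t (1%:M : 'M[R]_(3 * nx.+1)))^T.
    by move=> t; rewrite trmx_tens trmx1 /G !tensmx_mul mulmx1 mul1mx mulmx1.
  by rewrite !K !bf_conj.
have HD : Hb *m Dtil R nt nx Hx Qx *m Dtil R nt nx Hx Qx = Ht *t (QG R nx Qx *m DG R nx Hx Qx).
  rewrite /Hb /Dtil !tensmx_mul !mulmx1 /DG [Hg *m _]mulmxA HgHi mul1mx //.
have h2 : forall c', (r^T *m Hb *m (Dtil R nt nx Hx Qx *m (c' *: (Dtil R nt nx Hx Qx *m r)))) 0 0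
    = c' * bf (Ht *t (QG R nx Qx *m DG R nx Hx Qx)) r r.
  by move=> c'; rewrite -!scalemxAr mxZE /bf -HD !mulmxA.
have h2neg : bf (Ht *t (QG R nx Qx *m DG R nx Hx Qx)) r r <= 0.
  set K := ((1%:M : 'M[R]_3) *t (invmx Hx)) *m QG R nx Qx.
  have QGD : QG R nx Qx *m DG R nx Hx Qx = - (K^T *m Hg *m K).
    rewrite /K /DG trmx_mul QG_skew // trmx_tens trmx1 HxiT.
    by rewrite !mulNmx opprK -!mulmxA [Hg *m (_ *m _)]mulmxA HgHi mul1mx.
  rewrite QGD tensNr bf_oppM oppr_le0.
  have -> : Ht *t (K^T *m Hg *m K) = ((1%:M : 'M[R]_nt.+1) *t K)^T *m Hb *m ((1%:M : 'M[R]_nt.+1) *t K).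
    by rewrite trmx_tens trmx1 /Hb !tensmx_mul mul1mx mulmx1.
  by rewrite bf_conjT; apply: bf_dnn.
have h3 : (r^T *m Hb *m (siga *: r)) 0 0 = siga * bf Hb r r by rewrite -scalemxAr mxZE.
set b := (tBbig R nt nx)^T *m r.
have HS : Hb *m invmx (Htbig R nt nx Ht) *m tBbig R nt nx = tBbig R nt nx *m G.
  have n0 : (0 < 3 * nx.+1)%N by rewrite muln_gt0.
  rewrite /Htbig (@invmx_tens R _ _ Ht 1%:M (ltn0Sn nt) n0 uHt (unitmx1 _ _)) invmx1.
  rewrite /Hb /tBbig /G !tensmx_mul mulmxV // mul1mx !mulmx1 mul1mx //.
have h4 : (r^T *m Hb *m SAT R nt nx Ht r rho0) 0 0 = bf G b b - bf G b rho0.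
  have HS' : r^T *m Hb *m invmx (Htbig R nt nx Ht) *m tBbig R nt nx = r^T *m tBbig R nt nx *m G.
    by rewrite -!mulmxA [Hb *m (_ *m _)]mulmxA HS.
  rewrite /SAT !mulmxA HS' -bf_subr /bf /b trmx_mul trmxK ?mulmxA //.
rewrite h1 h2 h3 h4 in E.
set T := (_ * bf (Ht *t _) r r) in E.
have T0 : T <= 0.
  by rewrite /T; apply: mulr_ge0_le0.
have Y0 : 0 <= siga * bf Hb r r by apply: mulr_ge0 => //; exact: bf_dnn.
have P3 : 0 <= bf G (b - rho0) (b - rho0) by exact: bf_dnn.
rewrite bf_subl !bf_subr [bf G rho0 b]bf_tr GT in P3.
change (bf G ((tTbig R nt nx)^T *m r) ((tTbig R nt nx)^T *m r) <= bf G rho0 rho0).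
move: h1'; rewrite -/b => h1'.
lra.
Qed.
Lemma mx_cvg (R : realType) T (F : set_system T) (FF : Filter F) m n
  (f : T -> 'M[R]_(m, n)) (l : 'M[R]_(m, n)) :
  (forall i j, f x i j @[x --> F] --> l i j) -> f x @[x --> F] --> l.
Proof.
move=> h; apply/cvg_ballP => e e0.
have H : \forall x \near F, forall ij : 'I_m * 'I_n, ball (l ij.1 ij.2) e (f x ij.1 ij.2).
  apply: filter_forall => -[i j] /=.
  by move/cvg_ballP : (h i j) => /(_ e e0).
apply: filterS H => x Hx; split => // i j; exact: (Hx (i, j)).
Qed.

Lemma cvg_mulmx (R : realType) T (F : set_system T) (FF : Filter F) m n p
  (A : 'M[R]_(m, n)) (f : T -> 'M[R]_(n, p)) l :
  f x @[x --> F] --> l -> A *m f x @[x --> F] --> A *m l.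
Proof.
move=> fl; apply: mx_cvg => // i j.
rewrite mxE; under eq_cvg do rewrite mxE.
apply: (@cvg_big R _ +%R 0 xpredT add_continuous) => // k _.
apply: cvgMl_tmp.
exact: (continuous_cvg _ (@coord_continuous R n p k j l)).
Qed.
Lemma cvg_vavg (R : realType) T (F : set_system T) (FF : Filter F) nv m n
  (w : 'I_nv -> R) (f : T -> 'I_nv -> 'M[R]_(m, n)) (L : 'I_nv -> 'M[R]_(m, n)) :
  (forall k, f x k @[x --> F] --> L k) ->
  vavg R nv _ *:%R w (f x) @[x --> F] --> vavg R nv _ *:%R w L.
Proof.
move=> h; rewrite /vavg.
apply: (@cvg_big _ _ +%R 0 xpredT add_continuous) => // k _.
exact: cvgZl_tmp.
Qed.

Lemma lim_eq (R : realType) (U : topologicalType) (f g : R -> U) (a b : U) :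
  hausdorff_space U ->
  (forall e, 0 < e -> f e = g e) ->
  f e @[e --> (0 : R)^'+] --> a -> g e @[e --> (0 : R)^'+] --> b -> a = b.
Proof.
move=> hU hfg fa gb.
have gfa : g e @[e --> (0 : R)^'+] --> a.
  apply: (cvg_trans _ fa); apply: near_eq_cvg.
  by apply: filterS (@nbhs_right_gt R 0) => e e0; rewrite hfg.
exact: (@cvg_unique _ hU _ _ _ _ gfa gb).
Qed.

Lemma solve_g (R : realFieldType) (e v s a X Y Z W G S : R) : e != 0 ->
  X + v / e * Y - e^-1 * Z + v / e ^+ 2 * W = - ((s / e ^+ 2 + a) * G) - S ->
  v * W + s * G = - (e * (e * (X + a * G + S))) - e * (v * Y - Z).
Proof.
move=> e0 h.
have hW : v / e ^+ 2 * W = - ((s / e ^+ 2 + a) * G) - S - X - v / e * Y + e^-1 * Z.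
  by rewrite -h; ring.
have -> : v * W = e ^+ 2 * (v / e ^+ 2 * W) by field.
by rewrite hW; field.
Qed.

Lemma solve_gM (R : realFieldType) N (e v s a : R) (X Y Z W G S : 'cV[R]_N) : e != 0 ->
  X + (v / e) *: Y - e^-1 *: Z + (v / e ^+ 2) *: W = - ((s / e ^+ 2 + a) *: G) - S ->
  v *: W + s *: G = - (e *: (e *: (X + a *: G + S))) - e *: (v *: Y - Z).
Proof.
move=> e0 h; apply/matrixP => i j.
have h' := congr1 (fun M : 'cV[R]_N => M i j) h; rewrite /= !mxE in h'; rewrite !mxE.
exact: (@solve_g R _ _ _ _ _ _ _ _ _ _ e0 h').
Qed.

Lemma fick (R : realFieldType) N (s v : R) (W G X Y : 'cV[R]_N) : s != 0 ->
  v *: W + s *: G = - ((0:R) *: ((0:R) *: X)) - (0:R) *: Y -> G = - (v / s) *: W.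
Proof.
move=> s0; rewrite !scale0r oppr0 addr0 => h.
have Hsg : s *: G = - (v *: W) by apply/eqP; rewrite -addr_eq0 addrC h.
by rewrite -[LHS]scale1r -(mulVf s0) -scalerA Hsg scalerN scalerA mulrC scaleNr.
Qed.

Lemma vavg_fick (R : realFieldType) N nv (v w : 'I_nv -> R) (s : R) (Y : 'cV[R]_N)
  (G : 'I_nv -> 'cV[R]_N) : (forall k, G k = - (v k / s) *: Y) ->
  vavg R nv _ *:%R w (fun k => v k *: G k)
    = - (vavg R nv _ *%R w (fun k => v k ^+ 2) / s) *: Y.
Proof.
move=> hG; rewrite /vavg; under eq_bigr => k _ do rewrite hG !scalerA.
rewrite -scaler_suml; congr (_ *: _).
rewrite -mulNr -sumrN mulr_suml; apply: eq_bigr => k _ /=; ring.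
Qed.

Lemma final_alg (R : realFieldType) N (Dt Dx : 'M[R]_N) (r Y S : 'cV[R]_N) (c a : R) :
  Dt *m r + Dx *m (- c *: Y) = - (a *: r) - S ->
  Dt *m r = Dx *m (c *: Y) - a *: r - S.
Proof.
rewrite scaleNr mulmxN => h.
by rewrite -(subrK (Dx *m (c *: Y)) (Dt *m r)) h addrC addrA.
Qed.
Theorem theorem3p9 (R : realType) (nt nx nv pt px : nat)
  (tnodes : 'I_nt.+1 -> R) (Ht Qt : 'M[R]_nt.+1)
  (xnodes : 'I_nx.+1 -> R) (Hx Qx : 'M[R]_nx.+1)
  (v w : 'I_nv -> R) (sigs siga : R)
  (rho0 : 'cV[R]_(1 * (3 * nx.+1))) (g0 : 'I_nv -> 'cV[R]_(1 * (3 * nx.+1)))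
  (rho : R -> 'cV[R]_(nt.+1 * (3 * nx.+1)))
  (g : R -> 'I_nv -> 'cV[R]_(nt.+1 * (3 * nx.+1)))
  (rholim : 'cV[R]_(nt.+1 * (3 * nx.+1)))
  (glim : 'I_nv -> 'cV[R]_(nt.+1 * (3 * nx.+1))) :
  is_SBP R nt pt tnodes Ht Qt ->
  is_SBP R nx px xnodes Hx Qx ->
  \sum_(k < nv) w k = 1 ->
  \sum_(k < nv) w k * v k = 0 ->
  (forall k, 0 <= w k) ->
  0 < sigs -> 0 <= siga ->
  (forall eps : R, 0 < eps ->
     micro_macro_scheme R nt nx nv Ht Qt Hx Qx v w sigs siga eps rho0 g0
       (rho eps) (g eps)) ->
  rho eps @[eps --> (0 : R)^'+] --> rholim ->
  (forall k, g eps k @[eps --> (0 : R)^'+] --> glim k) ->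
  [/\ (* the eps -> 0 limit satisfies the limit (diffusion) scheme *)
      limit_scheme R nt nx nv Ht Qt Hx Qx v w sigs siga rho0 rholim,
      (* with the microscopic part determined by Fick's law *)
      (forall k, glim k = - (v k / sigs) *: (Dtil R nt nx Hx Qx *m rholim)),
      (* stability of the limit scheme: final-time energy bounded by the data *)
      (forall r, limit_scheme R nt nx nv Ht Qt Hx Qx v w sigs siga rho0 r ->
         energy R nx Hx ((tTbig R nt nx)^T *m r) <= energy R nx Hx rho0)
    & (* consistency: \tilde D^G_x differentiates exactly every continuous,
         periodic, elementwise polynomial grid function of degree <= px *)
      (forall P : 'I_3 -> {poly R},
         (forall e, (size (P e) <= px.+1)%N) ->
         (forall e, (P e).[xnodes ord_max] = (P (ordS e)).[xnodes ord0]) ->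
         forall (e : 'I_3) (j : 'I_nx.+1),
           (DG R nx Hx Qx *m
              \col_k (P (mxtens_unindex k).1).[xnodes (mxtens_unindex k).2])
             (mxtens_index (e, j)) 0
           = (P e)^`().[xnodes j])].
Proof.
move=> sbt sbx w1 wv0 w0 s0 a0 Hs rhoc gc.
have cvge : (fun e : R => e) @ (0 : R)^'+ --> (0 : R).
  by apply: cvg_at_right_filter; exact: cvg_id.
have cvgSAT : forall (f : R -> 'cV[R]_(nt.+1 * (3 * nx.+1))) l u0,
    f e @[e --> (0 : R)^'+] --> l ->
    SAT R nt nx Ht (f e) u0 @[e --> (0 : R)^'+] --> SAT R nt nx Ht l u0.
  move=> f l u0 fl; rewrite /SAT; apply: cvg_mulmx.
  by apply: cvgB; [exact: cvg_mulmx | exact: cvg_cst].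
have glimE : forall k, glim k = - (v k / sigs) *: (Dtil R nt nx Hx Qx *m rholim).
  move=> k.
  set Dt := Dtbig R nt nx Ht Qt; set Dx := Dtil R nt nx Hx Qx.
  have key : v k *: (Dx *m rholim) + sigs *: glim k =
     - ((0 : R) *: ((0 : R) *: (Dt *m glim k + siga *: glim k + SAT R nt nx Ht (glim k) (g0 k))))
     - (0 : R) *: (v k *: (Dx *m glim k) - vavg R nv _ *:%R w (fun j => v j *: (Dx *m glim j))).
    apply: (@lim_eq R _
      (fun e => v k *: (Dx *m rho e) + sigs *: g e k)
      (fun e => - (e *: (e *: (Dt *m g e k + siga *: g e k + SAT R nt nx Ht (g e k) (g0 k))))
                - e *: (v k *: (Dx *m g e k) - vavg R nv _ *:%R w (fun j => v j *: (Dx *m g e j))))).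
    - exact: norm_hausdorff.
    - move=> e e0; have [_ Hg] := Hs e e0; have Hk := Hg k.
      by apply: (@solve_gM R _ _ _ _ _ _ _ _ _ _ _ _ Hk); rewrite gt_eqF.
    - by apply: cvgD; apply: cvgZl_tmp; [exact: cvg_mulmx | exact: gc].
    - apply: cvgB; first apply: cvgN.
        apply: cvgZ => //; apply: cvgZ => //.
        by apply: cvgD; [apply: cvgD; [exact: cvg_mulmx | exact: cvgZl_tmp] | exact: cvgSAT].
      apply: cvgZ => //; apply: cvgB; first by apply: cvgZl_tmp; exact: cvg_mulmx.
      by apply: cvg_vavg => j; apply: cvgZl_tmp; exact: cvg_mulmx.
  have s0' : sigs != 0 by rewrite gt_eqF.
  exact: (@fick R _ _ _ _ _ _ _ s0' key).
split.
- rewrite /limit_scheme /=.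
  set Dt := Dtbig R nt nx Ht Qt; set Dx := Dtil R nt nx Hx Qx.
  have Hr : Dt *m rholim + Dx *m vavg R nv _ *:%R w (fun k => v k *: glim k)
            = - (siga *: rholim) - SAT R nt nx Ht rholim rho0.
    apply: (@lim_eq R _
      (fun e => Dt *m rho e + Dx *m vavg R nv _ *:%R w (fun k => v k *: g e k))
      (fun e => - (siga *: rho e) - SAT R nt nx Ht (rho e) rho0)).
    - exact: norm_hausdorff.
    - by move=> e e0; case: (Hs e e0).
    - apply: cvgD; first exact: cvg_mulmx.
      by apply: cvg_mulmx; apply: cvg_vavg => k; apply: cvgZl_tmp.
    - apply: cvgB; first by apply: cvgN; apply: cvgZl_tmp.
      exact: cvgSAT.
  have Vd := @vavg_fick R _ nv v w sigs (Dx *m rholim) glim glimE.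
  rewrite Vd in Hr.
  exact: (@final_alg R _ _ _ _ _ _ _ _ Hr).
- exact: glimE.
- by move=> r; apply: stability sbt sbx w0 s0 a0.
- exact: consist sbx.
Qed.
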